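(* Let ${\bf x}_1,\dots,{\bf x}_N\in\mathbb{C}^d$ be samples such that the sample covariance $\widehat{\bf C}=\frac1N\sum_{n=1}^N{\bf x}_n{\bf x}_n^H$ is invertible, and write $\hat{\rm E}[g({\bf x})]=\frac1N\sum_{n=1}^N g({\bf x}_n)$. Let $\phi:\mathbb{C}\to\mathbb{C}$ be any function and ${\bf w}\in\mathbb{C}^d\setminus\{{\bf 0}\}$. Put $\hat s_n={\bf w}^H{\bf x}_n$, $\hat\sigma=\sqrt{{\bf w}^H\widehat{\bf C}{\bf w}}$, ${\bf a}=\widehat{\bf C}{\bf w}/\hat\sigma^2$, $$\hat\nu=\hat{\rm E}\Big[\phi\Big(\frac{\hat s}{\hat\sigma}\Big)\frac{\hat s}{\hat\sigma}\Big],\qquad \nabla={\bf a}-\hat\nu^{-1}\hat{\rm E}\Big[\phi\Big(\frac{\hat s}{\hat\sigma}\Big)\frac{{\bf x}}{\hat\sigma}\Big],$$ and assume $\hat\nu\ne 0$. Then for every real $\lambda\neq1$ the matrix $\frac{\widehat{\bf C}}{\hat\sigma^2}-\lambda{\bf a}{\bf a}^H$ is invertible and $$\lim_{\lambda\to1}\Big(\frac{\widehat{\bf C}}{\hat\sigma^2}-\lambda{\bf a}{\bf a}^H\Big)^{-1}\nabla=\hat\sigma^2\,\widehat{\bf C}^{-1}\nabla.$$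
   Context: Here $\hat s=\hat s({\bf x})={\bf w}^H{\bf x}$ inside $\hat{\rm E}$. The vector ${\bf a}$ is the mixing vector linked to the separating vector ${\bf w}$ through the orthogonal constraint, and $\nabla$ is the normalized gradient used in one-unit FastDIVA; the matrix $\frac{\widehat{\bf C}}{\hat\sigma^2}-{\bf a}{\bf a}^H$ (the case $\lambda=1$) is rank deficient. *)

(* Defs.v *)
From HB Require Import structures.
From mathcomp Require Import all_boot all_order all_algebra.
From mathcomp Require Import all_classical all_reals all_analysis.
From mathcomp Require Import complex.
Set Implicit Arguments. Unset Strict Implicit. Unset Printing Implicit Defensive.
Import Order.TTheory GRing.Theory Num.Theory.
Import numFieldNormedType.Exports numFieldTopology.Exports.
Local Open Scope ring_scope.
Local Open Scope classical_set_scope.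

Definition ctr (R : rcfType) m n (A : 'M[R[i]]_(m, n)) : 'M[R[i]]_(n, m) :=
  (map_mx Num.conj A)^T.

Definition sample_cov (R : rcfType) (d N : nat) (x : 'I_N -> 'cV[R[i]]_d)
  : 'M[R[i]]_d :=
  (N%:R)^-1 *: \sum_(n < N) (x n *m ctr (x n)).

Definition Ehat (R : rcfType) (N : nat) p q (g : 'I_N -> 'M[R[i]]_(p, q))
  : 'M[R[i]]_(p, q) :=
  (N%:R)^-1 *: \sum_(n < N) g n.

Definition shat (R : rcfType) d N (w : 'cV[R[i]]_d) (x : 'I_N -> 'cV[R[i]]_d)
  (n : 'I_N) : R[i] := (ctr w *m x n) 0 0.

Definition sigmahat (R : rcfType) d N (w : 'cV[R[i]]_d) (x : 'I_N -> 'cV[R[i]]_d)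
  : R[i] := sqrtC ((ctr w *m sample_cov x *m w) 0 0).

Definition avec (R : rcfType) d N (w : 'cV[R[i]]_d) (x : 'I_N -> 'cV[R[i]]_d)
  : 'cV[R[i]]_d := (sigmahat w x ^+ 2)^-1 *: (sample_cov x *m w).

Definition nuhat (R : rcfType) d N (phi : R[i] -> R[i]) (w : 'cV[R[i]]_d)
  (x : 'I_N -> 'cV[R[i]]_d) : R[i] :=
  (N%:R)^-1 * \sum_(n < N)
     (phi (shat w x n / sigmahat w x) * (shat w x n / sigmahat w x)).

Definition gradhat (R : rcfType) d N (phi : R[i] -> R[i]) (w : 'cV[R[i]]_d)
  (x : 'I_N -> 'cV[R[i]]_d) : 'cV[R[i]]_d :=
  avec w x - (nuhat phi w x)^-1 *:
    Ehat (fun n => phi (shat w x n / sigmahat w x) *: ((sigmahat w x)^-1 *: x n)).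

Definition Mlam (R : rcfType) d N (w : 'cV[R[i]]_d) (x : 'I_N -> 'cV[R[i]]_d)
  (lam : R) : 'M[R[i]]_d :=
  (sigmahat w x ^+ 2)^-1 *: sample_cov x - (lam%:C)%C *: (avec w x *m ctr (avec w x)).

(* Convergence of a C^d-valued function of a real variable lam as lam -> 1,
   lam <> 1 (deleted neighbourhood), for the standard (norm) topology on
   C^d: R[i]^o is R[i] equipped with the topology induced by the complex
   modulus, and column vectors carry the product (max-norm) topology. *)
Definition cvg_to_at1 (R : realType) d (f : R -> 'cV[R[i]]_d) (L : 'cV[R[i]]_d)
  : Prop :=
  (fun lam : R => (f lam : 'cV[R[i]^o]_d)) @ (1 : R)^' --> (L : 'cV[R[i]^o]_d).

(* Main.v *)
Require Import Defs.
From HB Require Import structures.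
From mathcomp Require Import all_boot all_order all_algebra.
From mathcomp Require Import all_classical all_reals all_analysis.
From mathcomp Require Import complex.
From mathcomp Require Import ring.
From mathcomp Require Import ring.
Import Order.TTheory GRing.Theory Num.Theory.
Local Open Scope ring_scope.

Lemma key (F : fieldType) n (C Ci : 'M[F]_n) (w : 'cV_n) (h : 'rV_n) (q l mu : F) :
 C *m Ci = 1%:M -> h *m C *m w = q%:M -> q != 0 ->
 mu * (1 - l) = l ->
 (q^-1 *: C - l *: ((q^-1 *: (C *m w)) *m (q^-1 *: (h *m C)))) *m
   (q *: Ci + mu *: (w *m h)) = 1%:M.
Proof.
move=> CCi hCw q0 emu.
rewrite mulmxDr !mulmxBl -!scalemxAl -!scalemxAr !scalerA.
rewrite -!scalemxAl !scalerA.
rewrite -!mulmxA CCi mulmx1 (mulmxA h C) (mulmxA (h *m C) w) hCw mul_scalar_mx.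
rewrite -!scalemxAr !scalerA.
set PH := C *m (w *m h).
rewrite mulVf // scale1r.
rewrite -scalerBl -addrA -scaleNr -scalerDl.
have -> : - (l / q * q / q) + (q^-1 * mu - l / q * mu / q * q) = 0.
  rewrite !divfK //.
  have E : q^-1 * (mu*(1-l) - l) = 0 by rewrite emu subrr mulr0.
  rewrite -[RHS]E; ring.
by rewrite scale0r addr0.
Qed.

Section C.
Variable R : rcfType.
Implicit Types c : R[i].
Lemma ctrE m n (A : 'M[R[i]]_(m,n)) i j : ctr A i j = Num.conj (A j i).
Proof. by rewrite /ctr !mxE. Qed.
Lemma ctrM m n p (A : 'M[R[i]]_(m,n)) (B : 'M[R[i]]_(n, p)) : ctr (A *m B) = ctr B *m ctr A.
Proof. by rewrite /ctr map_mxM trmx_mul. Qed.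
Lemma ctrK m n (A : 'M[R[i]]_(m,n)) : ctr (ctr A) = A.
Proof. by apply/matrixP => i j; rewrite !ctrE conjCK. Qed.
Lemma ctrZ m n c (A : 'M[R[i]]_(m,n)) : ctr (c *: A) = Num.conj c *: ctr A.
Proof. by apply/matrixP => i j; rewrite !(ctrE, mxE) rmorphM. Qed.
Lemma ctrD m n (A B : 'M[R[i]]_(m,n)) : ctr (A + B) = ctr A + ctr B.
Proof. by apply/matrixP => i j; rewrite !(ctrE, mxE) rmorphD. Qed.
Lemma ctr0 m n : ctr (0 : 'M[R[i]]_(m,n)) = 0.
Proof. by apply/matrixP => i j; rewrite !(ctrE, mxE) rmorph0. Qed.
Lemma ctr_cov d N (x : 'I_N -> 'cV[R[i]]_d) : ctr (sample_cov x) = sample_cov x.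
Proof.
rewrite /sample_cov ctrZ fmorphV rmorph_nat; congr (_ *: _).
rewrite (big_morph _ (@ctrD _ _) (@ctr0 _ _)).
by apply: eq_bigr => n _; rewrite ctrM ctrK.
Qed.

Variables (d N : nat) (x : 'I_N -> 'cV[R[i]]_d) (w : 'cV[R[i]]_d).
Let C := sample_cov x.
Let q := (ctr w *m C *m w) 0 0.

Lemma q_real : Num.conj q = q.
Proof. by rewrite /q -ctrE !ctrM ctrK ctr_cov mulmxA. Qed.

Lemma entry11 m (A : 'M[R[i]]_(1, m)) (B : 'M[R[i]]_(m, 1)) :
  ctr B *m ctr A = ctr (A *m B).
Proof. by rewrite ctrM. Qed.

Lemma Cw_sum : C *m w = (N%:R)^-1 *: \sum_(n < N) x n *m (ctr (x n) *m w).
Proof.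
rewrite /C /sample_cov -scalemxAl mulmx_suml; congr (_ *: _).
by apply: eq_bigr => n _; rewrite mulmxA.
Qed.

Lemma q_neq0 : C \in unitmx -> w != 0 -> q != 0.
Proof.
move=> Cu; apply: contra_neq => q0.
have sE n : ctr (x n) *m w = (Num.conj (shat w x n))%:M.
  by rewrite -[w in LHS]ctrK -ctrM [LHS]mx11_scalar ctrE.
have qE : q = (N%:R)^-1 * \sum_(n < N) (shat w x n * Num.conj (shat w x n)).
  rewrite /q -mulmxA Cw_sum -scalemxAr mxE mulmx_sumr summxE; congr (_ * _).
  apply: eq_bigr => n _.
  by rewrite sE mul_mx_scalar -scalemxAr mxE mulrC.
have Cw0 : C *m w = 0.
  rewrite Cw_sum.
  move: q0; rewrite qE => /eqP; rewrite mulf_eq0 => /orP [/eqP ->|/eqP s0].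
    by rewrite scale0r.
  rewrite big1 ?scaler0 // => n _.
  have := psumr_eq0P (fun i _ => mul_conjC_ge0 (shat w x i)) s0 isT.
  move=> /(_ n) /eqP; rewrite mulf_eq0 conjC_eq0 orbb => /eqP sn0.
  by rewrite sE sn0 rmorph0 raddf0 mulmx0.
by rewrite -(mulKmx Cu w) Cw0 mulmx0.
Qed.
End C.

Lemma l1 (R : rcfType) (l : R) : l != 1 -> 1 - (l%:C)%C != 0.
Proof. move=> hl; rewrite subr_eq0; apply/eqP => /(congr1 (@complex.Re R)) /=.
by move=> /esym/eqP; rewrite (negbTE hl).
Qed.

Theorem proposition2 (R : realType) (d N : nat) (x : 'I_N -> 'cV[R[i]]_d)
  (phi : R[i] -> R[i]) (w : 'cV[R[i]]_d) :
  sample_cov x \in unitmx ->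
  w != 0 ->
  nuhat phi w x != 0 ->
  (forall lam : R, lam != 1 -> Mlam w x lam \in unitmx) /\
  cvg_to_at1 (fun lam : R => invmx (Mlam w x lam) *m gradhat phi w x)
     ((sigmahat w x ^+ 2) *: (invmx (sample_cov x) *m gradhat phi w x)).
Proof.
move=> Cu wne nune.
have q0 := @q_neq0 _ _ _ x w Cu wne.
have qr := @q_real _ _ _ x w.
set C := sample_cov x in Cu q0 qr *.
set q := (ctr w *m C *m w) 0 0 in q0 qr *.
have s2 : sigmahat w x ^+ 2 = q by rewrite /sigmahat sqrtCK.
have aE : avec w x = q^-1 *: (C *m w) by rewrite /avec s2.
have caE : ctr (avec w x) = q^-1 *: (ctr w *m C).
  by rewrite aE ctrZ fmorphV /= qr ctrM ctr_cov.
have hCw : ctr w *m C *m w = q%:M by rewrite [LHS]mx11_scalar.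
have ES : ctr w *m Ehat (fun n => phi (shat w x n / sigmahat w x) *:
     ((sigmahat w x)^-1 *: x n)) = (nuhat phi w x)%:M.
  rewrite /Ehat /nuhat -scalemxAr mulmx_sumr -scale_scalar_mx; congr (_ *: _).
  rewrite (raddf_sum (@scalar_mx _ 1)); apply: eq_bigr => n _.
  rewrite -!scalemxAr [ctr w *m x n]mx11_scalar !scale_scalar_mx; congr (_%:M).
  by congr (_ * _); rewrite mulrC.
have gw : ctr w *m gradhat phi w x = 0.
  rewrite /gradhat aE; move: ES; set E := Ehat _ => ES; rewrite mulmxBr -(scalemxAr _ (ctr w) E) -(scalemxAr q^-1) ES mulmxA hCw.
  by rewrite !scale_scalar_mx !mulVf // subrr.
pose X (lam : R) := q *: invmx C +
   ((lam%:C)%C / (1 - (lam%:C)%C)) *: (w *m ctr w).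
have MX lam : lam != 1 -> Mlam w x lam *m X lam = 1%:M.
  move=> hl; rewrite /Mlam s2 caE aE /X; apply: key => //.
    exact: mulmxV.
  by rewrite divfK // l1.
have XE lam : lam != 1 -> invmx (Mlam w x lam) *m gradhat phi w x =
    (sigmahat w x ^+ 2) *: (invmx C *m gradhat phi w x).
  move=> hl; have Mu := (mulmx1_unit (MX lam hl)).1.
  have -> : invmx (Mlam w x lam) = X lam.
    by rewrite -[X lam](mulKmx Mu) MX // mulmx1.
  by rewrite /X mulmxDl -!scalemxAl -mulmxA gw mulmx0 scaler0 addr0 s2.
split; first by move=> lam hl; exact: (mulmx1_unit (MX lam hl)).1.
rewrite /cvg_to_at1.
apply: cvg_near_cst; near=> lam.
have hl : lam != 1 by near: lam; exists 1%R => //= y _; apply.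
by rewrite XE.
Unshelve. all: by end_near.
Qed.
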